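(* Let $G=(V,E)$ be a connected graph with $V=\{1,\ldots,n\}$, $\mathbf{w}\colon E\to\{1,\ldots,N\}$, $w,\ell\in\mathbb{N}$ with $\ell$ even and $\ell\le n$, and let $\mathcal{T}$ be an elimination tree of $G$ with root $r$. Write $P_{(r)}(\emptyset)=\sum_{a,b,c,d}\alpha_{a,b,c,d}\,x^ay^bz^c\omega^d$. Then $|\mathcal{M}_{w,\ell}|=\alpha_{\ell/2,\ell/2,n-\ell,w}$.
   Context: Two matchings $M_1,M_2$ are consistent if $M_1\cap M_2=\emptyset$ and $V(M_1)=V(M_2)$ ($V(M)$ = set of endpoints of edges of $M$). $\mathcal{M}_{w,\ell}$ is the set of ordered pairs $(M_1,M_2)$ of consistent matchings in $G$ with $|M_1|=|M_2|=\ell/2$ and $\mathbf{w}(M_1\cup M_2)=w$, where $\mathbf{w}(F)=\sum_{e\in F}\mathbf{w}(e)$. An elimination tree of $G$ is a rooted tree on vertex set $V$ such that for every edge $\{u,v\}\in E$ one of $u,v$ is an ancestor of the other. $\mathtt{tree}[v]$ is the set of nodes of the subtree rooted at $v$ (including $v$). For $W\subseteq V$ let $W^+=\{u,u+n\mid u\in W\}$; $\delta[U]=\{e\in E\mid e\cap U\ne\emptyset\}$. Define $\mathtt{tpl}(W)=\{(E_1,E_2,L)\mid E_1,E_2\subseteq\delta[W],\ L\subseteq W,\ E_1\cap E_2=\emptyset\}$; $\mathtt{mon}(E_1,E_2,L)=x^{|E_1|}y^{|E_2|}z^{|L|}\omega^{\mathbf{w}(E_1\cup E_2)}$; for $I\subseteq[2n]$,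 $\mathtt{dsj}(I)$ is the set of triples $(E_1,E_2,L)$ with $\{s,t\}\cap I=\emptyset$ for all $\{s,t\}\in E_1$, $\{s+n,t+n\}\cap I=\emptyset$ for all $\{s,t\}\in E_2$, and $L^+\cap I=\emptyset$. With Iverson bracket $[\cdot]$, for the root $r$ (whose ancestor set excluding itself is empty), $$P_{(r)}(\emptyset)=\sum_{(E_1,E_2,L)\in\mathtt{tpl}(\mathtt{tree}[r])}\mathtt{mon}(E_1,E_2,L)\sum_{K\subseteq(\mathtt{tree}[r])^+}(-1)^{|K|}[(E_1,E_2,L)\in\mathtt{dsj}(K)]\in\mathbb{Z}[x,y,z,\omega].$$ *)

(* Defs.v *)
From HB Require Import structures.
From mathcomp Require Import all_boot all_order all_algebra.
From mathcomp Require Import mpoly.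
Set Implicit Arguments. Unset Strict Implicit. Unset Printing Implicit Defensive.
Import GRing.Theory.
Local Open Scope ring_scope.

Section Defs.
Variable n : nat.
(* Vertices V = {1,..,n} are encoded by 'I_n (0-based).
   The doubled vertex set [2n] is encoded by 'I_n + 'I_n : inl u ~ u, inr u ~ u+n. *)
Implicit Types (E F : {set {set 'I_n}}) (W L : {set 'I_n}).

Definition simple_graph E : Prop := forall e, e \in E -> #|e| = 2.

Definition adj E : rel 'I_n := fun u v => [set u; v] \in E.

Definition connected_graph E : Prop := forall u v, connect (adj E) u v.

Definition wsum (wt : {set 'I_n} -> nat) F : nat := (\sum_(e in F) wt e)%N.

Definition Vset F : {set 'I_n} := \bigcup_(e in F) e.

Definition is_matching E F : bool :=
  (F \subset E) && [forall e in F, forall f in F, (e != f) ==> [disjoint e & f]].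

Definition consistent F1 F2 : bool := (F1 :&: F2 == set0) && (Vset F1 == Vset F2).

Definition Mwl E (wt : {set 'I_n} -> nat) (w l : nat) :
  {set {set {set 'I_n}} * {set {set 'I_n}}} :=
  [set p | [&& is_matching E p.1, is_matching E p.2,
              consistent p.1 p.2,
              (#|p.1| == l./2)%N, (#|p.2| == l./2)%N
            & wsum wt (p.1 :|: p.2) == w]].

(* Rooted tree on 'I_n given by a parent function; [connect (parrel par) u v]
   means that v is an ancestor of u or v = u. *)
Definition parrel (par : 'I_n -> option 'I_n) : rel 'I_n :=
  fun u v => par u == Some v.

Definition rooted_tree (par : 'I_n -> option 'I_n) (r : 'I_n) : Prop :=
  [/\ par r = None, (forall v, v != r -> par v != None)
    & forall v, connect (parrel par) v r].

Definition elimination_tree E (par : 'I_n -> option 'I_n) (r : 'I_n) : Prop :=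
  rooted_tree par r /\
  forall e, e \in E -> forall u v, u \in e -> v \in e ->
    connect (parrel par) u v || connect (parrel par) v u.

Definition subtree (par : 'I_n -> option 'I_n) (v : 'I_n) : {set 'I_n} :=
  [set u | connect (parrel par) u v].

Definition plusset W : {set 'I_n + 'I_n} :=
  [set s | match s with inl u => u \in W | inr u => u \in W end].

Definition delta E W : {set {set 'I_n}} := [set e in E | e :&: W != set0].

Definition in_tpl E W E1 E2 L : bool :=
  [&& E1 \subset delta E W, E2 \subset delta E W, L \subset W & [disjoint E1 & E2]].

Definition in_dsj (I : {set 'I_n + 'I_n}) E1 E2 L : bool :=
  [&& [forall e in E1, forall s in e, inl s \notin I],
      [forall e in E2, forall s in e, inr s \notin I]
    & [disjoint plusset L & I]].

(* variables x = 'X_0, y = 'X_1, z = 'X_2, omega = 'X_3 *)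
Definition mon (wt : {set 'I_n} -> nat) E1 E2 L : {mpoly int[4]} :=
  'X_(0 : 'I_4) ^+ #|E1| * 'X_(1 : 'I_4) ^+ #|E2| * 'X_(2 : 'I_4) ^+ #|L|
  * 'X_(3 : 'I_4) ^+ wsum wt (E1 :|: E2).

Definition P_root E (wt : {set 'I_n} -> nat) (par : 'I_n -> option 'I_n) (r : 'I_n)
  : {mpoly int[4]} :=
  \sum_(E1 : {set {set 'I_n}}) \sum_(E2 : {set {set 'I_n}}) \sum_(L : {set 'I_n}
        | in_tpl E (subtree par r) E1 E2 L)
    mon wt E1 E2 L *
      (\sum_(K : {set 'I_n + 'I_n} | K \subset plusset (subtree par r))
          (-1) ^+ #|K| * (in_dsj K E1 E2 L)%:R : int)%:MP.

End Defs.

Definition coef4 (p : {mpoly int[4]}) (a b c d : nat) : int :=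
  p@_[multinom [tuple a; b; c; d]].

(* Main.v *)
Require Import Defs.
From HB Require Import structures.
From mathcomp Require Import all_boot all_order all_algebra.
From mathcomp Require Import mpoly zify.
Set Implicit Arguments. Unset Strict Implicit. Unset Printing Implicit Defensive.
Import GRing.Theory Num.Theory.
Local Open Scope ring_scope.

Lemma alt_sum (T : finType) (S : {set T}) :
  \sum_(K : {set T}) ((-1) ^+ #|K| * ([disjoint S & K])%:R : int) = (S == setT)%:R.
Proof.
under eq_bigr do rewrite disjoint_sym disjoints_subset.
have [->|] := eqVneq S setT.
  rewrite (bigD1 set0) //= big1 ?addr0 ?cards0 ?sub0set ?mulr1 //.
  move=> K HK; rewrite setCT subset0 (negbTE HK); by rewrite mulr0.
move=> /eqP; rewrite -setP => /(_ _) nS.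
have [a aS] : exists a, a \notin S.
  case: (pickP (fun x => x \notin S)) => [a aS | H]; first by exists a.
  exfalso; apply: nS => x; have := H x; rewrite inE /=; by case: (x \in S).
pose f (K : {set T}) := if a \in K then K :\ a else a |: K.
have ff : involutive f.
  move=> K; rewrite /f; case aK: (a \in K).
    by rewrite !inE eqxx /= setD1K.
  by rewrite !inE eqxx /= setU1K ?aK.
set s := \sum_K _.
have : s = - s.
  rewrite {1}/s (reindex_inj (inv_inj ff)) /s -sumrN; apply: eq_bigr => K _.
  have -> : (f K \subset ~: S) = (K \subset ~: S).
    rewrite /f; case: ifP => aK.
      by rewrite -[in RHS](setD1K aK) subUset sub1set inE aS.
    by rewrite subUset sub1set inE aS.
  rewrite /f; case: ifP => aK.
    by rewrite [in RHS](cardsD1 a K) aK exprS mulN1r mulNr opprK.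
  by rewrite cardsU1 aK exprS mulN1r mulNr.
move=> /eqP; rewrite -subr_eq0 opprK -mulr2n mulrn_eq0 /= => /eqP ->.
done.
Qed.
Lemma coefX4 (a b c d a' b' c' d' : nat) :
  (('X_(0 : 'I_4) ^+ a * 'X_(1 : 'I_4) ^+ b * 'X_(2 : 'I_4) ^+ c
  * 'X_(3 : 'I_4) ^+ d : {mpoly int[4]}) @_[multinom [tuple a'; b'; c'; d']])
  = [&& a == a', b == b', c == c' & d == d']%:R.
Proof.
have -> : ('X_(0 : 'I_4) ^+ a * 'X_(1 : 'I_4) ^+ b * 'X_(2 : 'I_4) ^+ c
  * 'X_(3 : 'I_4) ^+ d : {mpoly int[4]}) = 'X_[[multinom [tuple a; b; c; d]]].
  rewrite [RHS]mpolyXE_id !big_ord_recr big_ord0 /= mul1r.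
  reflexivity.
by rewrite mcoeffX -val_eqE /= -val_eqE /= !eqseq_cons andbT.
Qed.
Section K.
Variable n : nat.
Implicit Types (E F : {set {set 'I_n}}) (L : {set 'I_n}).

Lemma delta_T E : simple_graph E -> delta E setT = E.
Proof.
move=> sE; apply/setP => e; rewrite inE setIT.
case eE: (e \in E) => //=; by rewrite -card_gt0 (sE e eE).
Qed.

Lemma cardV E F : simple_graph E -> F \subset E ->
  (#|Vset F| <= 2 * #|F|)%N /\ ((#|Vset F| == 2 * #|F|)%N = is_matching E F).
Proof.
move=> sE FE.
have Hs : (\sum_(A in F) #|A| = 2 * #|F|)%N.
  rewrite (eq_bigr (fun _ => 2%N)); first by rewrite sum_nat_const mulnC.
  by move=> A AF; apply: sE; apply: (subsetP FE).
have [H1 H2] := leq_card_cover F.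
rewrite /Vset -/(cover F) -Hs; split => //; rewrite H2 /is_matching FE /=.
apply/trivIsetP/forall_inP => [H e eF | H e f eF fF].
  by apply/forall_inP => f fF; apply/implyP; apply: H.
by move/forall_inP: (H e eF) => /(_ f fF)/implyP.
Qed.

Lemma key E wt w l E1 E2 L : simple_graph E -> ~~ odd l -> (l <= n)%N ->
  [&& in_tpl E setT E1 E2 L, (Vset E1 :|: L == setT) && (Vset E2 :|: L == setT) &
      [&& #|E1| == l./2, #|E2| == l./2, #|L| == n - l & wsum wt (E1 :|: E2) == w]]%N
  = (L == ~: Vset E1) && ((E1,E2) \in Mwl E wt w l).
Proof.
move=> sE el ln.
have l2 : l = (2 * l./2)%N by rewrite -{1}(odd_double_half l) (negbTE el) mul2n.
have cT : #|[set: 'I_n]| = n by rewrite cardsT card_ord.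
rewrite /in_tpl delta_T // subsetT inE /= /consistent setI_eq0.
apply/idP/idP.
- case/and5P => /and3P[E1E E2E d12] /andP[/eqP c1 /eqP c2] /eqP s1 /eqP s2 /andP[/eqP sL ww].
  have [le1 m1] := cardV sE E1E.
  have [le2 m2] := cardV sE E2E.
  have [u1 _] := leq_card_setU (Vset E1) L.
  have [u2 _] := leq_card_setU (Vset E2) L.
  have [_ d1] := leq_card_setU (Vset E1) L.
  have [_ d2] := leq_card_setU (Vset E2) L.
  rewrite c1 cT in u1 d1; rewrite c2 cT in u2 d2.
  have [v1 w1] : #|Vset E1| = l /\ n = (#|Vset E1| + #|L|)%N.
    by move: le1 u1; rewrite s1 -l2 sL; clear -ln; move=> *; lia.
  have [v2 w2] : #|Vset E2| = l /\ n = (#|Vset E2| + #|L|)%N.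
    by move: le2 u2; rewrite s2 -l2 sL; clear -ln; move=> *; lia.
  have e1 : (#|Vset E1| == 2 * #|E1|)%N by rewrite v1 s1 -l2.
  have e2 : (#|Vset E2| == 2 * #|E2|)%N by rewrite v2 s2 -l2.
  have dj1 : [disjoint Vset E1 & L] by rewrite -d1 -w1.
  have dj2 : [disjoint Vset E2 & L] by rewrite -d2 -w2.
  have LC1 : L = ~: Vset E1.
    apply/setP => u; move/setP: c1 => /(_ u); move/disjoint_setI0/setP: dj1 => /(_ u).
    by rewrite !inE; case: (u \in Vset E1); case: (u \in L).
  have LC2 : L = ~: Vset E2.
    apply/setP => u; move/setP: c2 => /(_ u); move/disjoint_setI0/setP: dj2 => /(_ u).
    by rewrite !inE; case: (u \in Vset E2); case: (u \in L).
  rewrite LC1 eqxx /= -m1 -m2 e1 e2 d12 s1 s2 ww eqxx /=.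
  by rewrite -(setCK (Vset E1)) -LC1 LC2 setCK eqxx.
- case/andP => /eqP -> /and5P[m1 m2 /andP[d12 /eqP v12] s1 /andP[s2 ww]].
  have E1E : E1 \subset E by case/andP: m1.
  have E2E : E2 \subset E by case/andP: m2.
  have [_ e1] := cardV sE E1E; rewrite m1 in e1.
  have [_ e2] := cardV sE E2E.
  rewrite E1E E2E d12 /= -v12 setUCr eqxx /= s1 s2 ww /= andbT.
  have := cardsC (Vset E1); rewrite card_ord => hc.
  move/eqP: e1; move/eqP: s1 => s1 e1; apply/eqP; by rewrite l2 -s1 -e1 -(addKn #|Vset E1| #|~: Vset E1|) hc.
Qed.
Definition Sset E1 E2 L : {set 'I_n + 'I_n} :=
  [set s | match s with inl u => u \in Vset E1 :|: L | inr u => u \in Vset E2 :|: L end].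

Lemma dsjE K E1 E2 L : in_dsj K E1 E2 L = [disjoint Sset E1 E2 L & K].
Proof.
rewrite /in_dsj [RHS]disjoint_sym [RHS]disjoints_subset.
apply/and3P/subsetP => [[/forall_inP H1 /forall_inP H2 H3] [u|u] uK | H].
- rewrite !inE negb_or; apply/andP; split.
    apply/bigcupP => -[e eE ue]; move/forall_inP: (H1 e eE) => /(_ u ue).
    by rewrite uK.
  apply/negP => uL; move: H3; rewrite disjoints_subset => /subsetP/(_ (inl u)).
  by rewrite !inE /= uL uK => /(_ isT).
- rewrite !inE negb_or; apply/andP; split.
    apply/bigcupP => -[e eE ue]; move/forall_inP: (H2 e eE) => /(_ u ue).
    by rewrite uK.
  apply/negP => uL; move: H3; rewrite disjoints_subset => /subsetP/(_ (inr u)).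
  by rewrite !inE /= uL uK => /(_ isT).
split.
- apply/forall_inP => e eE; apply/forall_inP => u ue; apply/negP => uK.
  move/(_ _ uK): H; rewrite !inE negb_or => /andP[/negP []].
  by apply/bigcupP; exists e.
- apply/forall_inP => e eE; apply/forall_inP => u ue; apply/negP => uK.
  move/(_ _ uK): H; rewrite !inE negb_or => /andP[/negP []].
  by apply/bigcupP; exists e.
- rewrite disjoints_subset; apply/subsetP => -[u|u]; rewrite !inE /= => uL;
  apply/negP => uK; move/(_ _ uK): H; by rewrite !inE /= uL orbT.
Qed.

Lemma inner E1 E2 L :
  (\sum_(K : {set 'I_n + 'I_n} | K \subset plusset [set: 'I_n])
     ((-1) ^+ #|K| * (in_dsj K E1 E2 L)%:R : int))
  = ((Vset E1 :|: L == setT) && (Vset E2 :|: L == setT))%:R.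
Proof.
rewrite (eq_bigl (fun _ => true)); last first.
  by move=> K; apply/subsetP => -[u|u] _; rewrite !inE.
under eq_bigr do rewrite dsjE.
rewrite alt_sum; congr ((nat_of_bool _)%:R).
apply/idP/idP => [/eqP H | /andP[/eqP H1 /eqP H2]].
  apply/andP; split; apply/eqP/setP => u.
    by move/setP: H => /(_ (inl u)); rewrite !inE.
  by move/setP: H => /(_ (inr u)); rewrite !inE.
apply/eqP/setP => -[u|u]; rewrite !inE /=.
  by move/setP: H1 => /(_ u); rewrite !inE.
by move/setP: H2 => /(_ u); rewrite !inE.
Qed.
End K.

Theorem lemma7 (n N : nat) (E : {set {set 'I_n}}) (wt : {set 'I_n} -> nat)
  (w l : nat) (par : 'I_n -> option 'I_n) (r : 'I_n) :
  simple_graph E -> connected_graph E ->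
  (forall e, e \in E -> (1 <= wt e <= N)%N) ->
  ~~ odd l -> (l <= n)%N ->
  elimination_tree E par r ->
  (#|Mwl E wt w l|)%:Z = coef4 (P_root E wt par r) l./2 l./2 (n - l) w.
Proof.
move=> sE _ _ el ln [[_ _ conn] _].
have sT : subtree par r = setT by apply/setP => u; rewrite !inE conn.
rewrite /P_root sT.
have -> : (#|Mwl E wt w l|)%:Z = \sum_(E1 : {set {set 'I_n}}) \sum_(E2 : {set {set 'I_n}})
    (((E1, E2) \in Mwl E wt w l)%:R : int).
  rewrite pair_bigA /= -natz -sumr_const big_mkcond /=.
  by apply: eq_bigr => -[E1 E2] _; case: ifP.
rewrite /coef4 raddf_sum; apply: eq_bigr => E1 _; rewrite raddf_sum; apply: eq_bigr => E2 _.
rewrite raddf_sum big_mkcond /=.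
rewrite (eq_bigr (fun L => ((L == ~: Vset E1) && ((E1, E2) \in Mwl E wt w l))%:R)); last first.
  move=> L _; rewrite -(key wt w E1 E2 L sE el ln).
  case: ifP => tp //=.
  rewrite inner mulrC mcoeffCM /mon coefX4 -natrM mulnb.
  done.
rewrite (bigD1 (~: Vset E1)) //= eqxx /= big1 ?addr0 // => L /negbTE ->.
done.
Qed.
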